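(* Let $\Pi$ be a ground HEX-program, let $\hat{\mathbf{A}}$ be a compatible set of $\Pi$, and let $\mathbf{A}$ be the restriction of $\hat{\mathbf{A}}$ to the non-replacement (ordinary) atoms. Suppose the atom dependency graph of $\Pi$ contains no e-cycle under $\rightarrow^{d}$, and the guessing program $\hat{\Pi}$ has no nonempty unfounded set with respect to $\hat{\mathbf{A}}$. Then $\mathbf{A}$ is unfounded-free for $\Pi$, i.e. $\mathbf{A}^{\mathbf{T}}\cap X=\emptyset$ for every unfounded set $X$ of $\Pi$ with respect to $\mathbf{A}$.
   Context: Ground HEX-programs. A ground ordinary atom is $p(c_1,\dots,c_\ell)$ with predicate $p$ and constants $c_i$. A ground external atom is $\&g[\vec p](\vec c)$ with input list $\vec p=p_1,\dots,p_k$ (predicate names or constants) and output list $\vec c$ of constants. A ground HEX-program is a finite set of rules $r$: $a_1\lor\dots\lor a_k\leftarrow b_1,\dots,b_m,\mathrm{not}\,b_{m+1},\dots,\mathrm{not}\,b_n$, where the $a_i$ are ordinary ground atoms and each $b_j$ is an ordinary ground atom or ground external atom; $H(r)=\{a_1,\dots,a_k\}$, $B^+(r)=\{b_1,\dots,b_m\}$, $B^-(r)=\{b_{m+1},\dots,b_n\}$, $B(r)$ is the set of body literals. $A(\Pi)$ is the set of ordinary atoms occurring in $\Pi$. Interpretations. An interpretation $\mathbf{A}$ is a complete consistent set of signed literals $\mathbf{T}a$/$\mathbf{F}a$ over ground atoms; $\mathbf{A}^{\mathbf{T}}=\{a\mid \mathbf{T}a\in\mathbf{A}\}$. $\mathbf{A}\models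 a$ for ordinary $a$ iff $\mathbf{T}a\in\mathbf{A}$; each external predicate $\&g$ has a Boolean oracle $f_{\&g}(\mathbf{A},\vec p,\vec c)$ whose value depends only on the extensions in $\mathbf{A}$ of the input predicates in $\vec p$ (and on $\vec p,\vec c$), and $\mathbf{A}\models\&g[\vec p](\vec c)$ iff $f_{\&g}(\mathbf{A},\vec p,\vec c)=1$; $\mathbf{A}\models\mathrm{not}\,b$ iff $\mathbf{A}\not\models b$. Unfounded sets. For a program $\Pi$, interpretation $\mathbf{A}$ and a set $X$ of ordinary ground atoms appearing in $\Pi$, let $\mathbf{A}\,\dot\cup\neg.\,X=(\mathbf{A}\setminus\{\mathbf{T}a\mid a\in X\})\cup\{\mathbf{F}a\mid a\in X\}$. $X$ is an unfounded set of $\Pi$ w.r.t. $\mathbf{A}$ iff for every rule $r\in\Pi$ with $H(r)\cap X\neq\emptyset$ at least one holds: (i) some literal of $B(r)$ is false w.r.t. $\mathbf{A}$; (ii) some literal of $B(r)$ is false w.r.t. $\mathbf{A}\,\dot\cup\neg.\,X$; (iii) some atom of $H(r)\setminus X$ is true w.r.t. $\mathbf{A}$. Guessing program and compatible sets. $\hat\Pi$ is obtained from $\Pi$ by replacing each external atom $\&g[\vec p](\vec c)$ by a new ordinary replacement atom $e_{\&g[\vec p]}(\vec c)$ and adding the rule $e_{\&g[\vec p]}(\vec c)\lor ne_{\&g[\vec p]}(\vec c)\leftarrow$. A compatible set of $\Pi$ is an interpretation $\hat{\mathbf{A}}$ that is an answer set (Gelfond–Lifschitz) of $\hat\Pi$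 and such that $f_{\&g}(\hat{\mathbf{A}},\vec p,\vec c)=1$ iff $\mathbf{T}e_{\&g[\vec p]}(\vec c)\in\hat{\mathbf{A}}$ for all external atoms $\&g[\vec p](\vec c)$ of $\Pi$. Dependencies. For ground atoms $x,y$: $x\rightarrow y$ iff some rule $r\in\Pi$ has $x\in H(r)$ and $y\in B^+(r)$; $x\rightarrow_e y$ iff some rule $r\in\Pi$ has $x\in H(r)$ and an external atom $\&g[q_1,\dots,q_n](\vec e)\in B^+(r)\cup B^-(r)$ with $q_i$ equal to the predicate of $y$ for some $i$ (edges of the second kind are called e-edges). Let $\rightarrow^d=\rightarrow\cup\leftarrow\cup\rightarrow_e$ where $\leftarrow$ is the inverse of $\rightarrow$. A cycle under a relation $\circ$ is a sequence $c_0,\dots,c_{n+1}$, $n\ge0$, with $(c_i,c_{i+1})\in\circ$ for all $0\le i\le n$ and $c_0=c_{n+1}$; an e-cycle is a cycle under $\rightarrow^d$ with $(c_i,c_{i+1})\in\rightarrow_e$ for some $i$. *)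

(* Defs.v *)
From Stdlib Require List.
From mathcomp Require Import all_boot.
Set Implicit Arguments. Unset Strict Implicit. Unset Printing Implicit Defensive.

(* Generic ground rules  a_1 v ... v a_k <- b_1,...,b_m, not b_m+1,... *)
Record rule (A L : Type) := mkRule { head : seq A; bpos : seq L; bneg : seq L }.

Section Generic.
Variables (A L : eqType).
(* eval I b : truth of body atom b under interpretation I;
   lat b : the ordinary atoms occurring in body atom b *)
Variables (eval : pred A -> L -> bool) (lat : L -> seq A).

Definition body_false (I : pred A) (r : rule A L) : bool :=
  has (fun b => ~~ eval I b) (bpos r) || has (eval I) (bneg r).

Definition atoms_of (p : seq (rule A L)) : pred A := fun a =>
  has (fun r => (a \in head r) || has (fun b => a \in lat b) (bpos r ++ bneg r)) p.

Definition remove_set (I X : pred A) : pred A := fun a => I a && ~~ X a.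

Definition unfounded (p : seq (rule A L)) (I X : pred A) : Prop :=
  {subset X <= atoms_of p} /\
  all (fun r => has X (head r) ==>
         [|| body_false I r, body_false (remove_set I X) r
           | has (fun a => ~~ X a && I a) (head r)]) p.
End Generic.

Section Hex.
Variables (P C G : eqType). (* predicates, constants, external predicates *)

Definition atom := (P * seq C)%type.
Definition pred_of (a : atom) : P := a.1.

(* ground external atom &g[p_1..p_k](c_1..c_n) *)
Definition extatom := (G * seq (P + C) * seq C)%type.
Definition ext_name (e : extatom) : G := e.1.1.
Definition ext_input (e : extatom) : seq (P + C) := e.1.2.
Definition ext_output (e : extatom) : seq C := e.2.

Definition oracle := G -> pred atom -> seq (P + C) -> seq C -> bool.

Definition oracle_local (f : oracle) : Prop :=
  forall g (I J : pred atom) inp out,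
    (forall a : atom, inl (pred_of a) \in inp -> I a = J a) ->
    f g I inp out = f g J inp out.

Definition blit := (atom + extatom)%type.
Definition hexprog := seq (rule atom blit).

Definition eval_hex (f : oracle) (I : pred atom) (b : blit) : bool :=
  match b with
  | inl a => I a
  | inr e => f (ext_name e) I (ext_input e) (ext_output e)
  end.

Definition lat_hex (b : blit) : seq atom :=
  match b with inl a => [:: a] | inr _ => [::] end.

Definition unfounded_hex (f : oracle) (p : hexprog) (I X : pred atom) : Prop :=
  unfounded (eval_hex f) lat_hex p I X.

Definition unfounded_free (f : oracle) (p : hexprog) (I : pred atom) : Prop :=
  forall X : pred atom, unfounded_hex f p I X -> forall a, X a -> ~~ I a.

(* atoms of the guessing program: ordinary atoms, and replacement atoms
   (e, true) = e_{&g[p]}(c), (e, false) = ne_{&g[p]}(c) *)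
Definition hatatom := (atom + (extatom * bool))%type.

Definition restrict (Ih : pred hatatom) : pred atom := fun a => Ih (inl a).

Definition replace_lit (b : blit) : hatatom :=
  match b with inl a => inl a | inr e => inr (e, true) end.

Definition hat_rule (r : rule atom blit) : rule hatatom hatatom :=
  mkRule (map inl (head r)) (map replace_lit (bpos r)) (map replace_lit (bneg r)).

Definition ext_of_rule (r : rule atom blit) : seq extatom :=
  pmap (fun b : blit => if b is inr e then Some e else None) (bpos r ++ bneg r).

Definition ext_atoms (p : hexprog) : seq extatom := flatten (map ext_of_rule p).

Definition guess_rule (e : extatom) : rule hatatom hatatom :=
  mkRule [:: inr (e, true); inr (e, false)] [::] [::].

Definition hat_prog (p : hexprog) : seq (rule hatatom hatatom) :=
  map hat_rule p ++ map guess_rule (ext_atoms p).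

Definition eval_hat (I : pred hatatom) (b : hatatom) : bool := I b.
Definition lat_hat (b : hatatom) : seq hatatom := [:: b].

Definition unfounded_hat (p : seq (rule hatatom hatatom)) (I X : pred hatatom) : Prop :=
  unfounded eval_hat lat_hat p I X.

Definition reduct (I : pred hatatom) (p : seq (rule hatatom hatatom)) :=
  [seq mkRule (head r) (bpos r) [::] | r <- p & ~~ has I (bneg r)].

Definition is_model (p : seq (rule hatatom hatatom)) (J : pred hatatom) : Prop :=
  all (fun r => all J (bpos r) ==> has J (head r)) p.

Definition answer_set (p : seq (rule hatatom hatatom)) (I : pred hatatom) : Prop :=
  is_model (reduct I p) I /\
  forall J : pred hatatom, is_model (reduct I p) J ->
    (forall a, J a -> I a) -> forall a, I a -> J a.

Definition compatible (f : oracle) (p : hexprog) (Ih : pred hatatom) : Prop :=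
  answer_set (hat_prog p) Ih /\
  forall e, e \in ext_atoms p ->
    f (ext_name e) (restrict Ih) (ext_input e) (ext_output e) = Ih (inr (e, true)).

Definition dep_pos (p : hexprog) (x y : atom) : Prop :=
  exists2 r, List.In r p & (x \in head r) /\ (inl y \in bpos r).

Definition dep_ext (p : hexprog) (x y : atom) : Prop :=
  exists2 r, List.In r p & (x \in head r) /\
    exists e : extatom, (inr e \in bpos r ++ bneg r) /\ (inl (pred_of y) \in ext_input e).

Definition dep_d (p : hexprog) (x y : atom) : Prop :=
  dep_pos p x y \/ dep_pos p y x \/ dep_ext p x y.

Definition has_ecycle (p : hexprog) : Prop :=
  exists (n : nat) (c : nat -> atom),
    c 0 = c n.+1 /\ (forall i, i <= n -> dep_d p (c i) (c i.+1)) /\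
    exists i, i <= n /\ dep_ext p (c i) (c i.+1).
End Hex.

(* Main.v *)
Require Import Defs.
From mathcomp Require Import all_boot.
From Stdlib Require Import Classical ClassicalEpsilon.
Set Implicit Arguments. Unset Strict Implicit. Unset Printing Implicit Defensive.

Section Graph.
Variables (P C G : eqType) (p : hexprog P C G).
Notation atm := (atom P C).

Fixpoint chain (x : atm) (s : seq atm) : Prop :=
  match s with [::] => True | y :: s' => dep_d p x y /\ chain y s' end.

Lemma chain_cat x s1 s2 : chain x (s1 ++ s2) <-> chain x s1 /\ chain (last x s1) s2.
Proof.
elim: s1 x => [|y s1 IH] x /=; first by tauto.
split.
- move=> [H1 /IH [H2 H3]]; tauto.
- move=> [[H1 H2] H3]; split=> //; apply/IH; tauto.
Qed.

Definition Rr x y := exists s, chain x s /\ last x s = y.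

Lemma Rr_refl x : Rr x x.
Proof. by exists [::]. Qed.

Lemma Rr_trans x y z : Rr x y -> Rr y z -> Rr x z.
Proof.
move=> [s1 [c1 l1]] [s2 [c2 l2]]; exists (s1 ++ s2); rewrite last_cat l1; split=> //.
by apply/chain_cat; rewrite l1.
Qed.

Lemma Rr_step x y : dep_d p x y -> Rr x y.
Proof. by move=> H; exists [:: y]. Qed.

Lemma chain_nth d x t i : chain x t -> i < size t ->
  dep_d p (nth d (x :: t) i) (nth d t i).
Proof.
elim: t x i => [|y t IH] x [|i] //= [H1 H2] Hi.
by []. exact: IH.
Qed.

Lemma ecycle y z : Rr y z -> dep_ext p z y -> has_ecycle p.
Proof.
move=> [s [cs ls]] He.
exists (size s), (fun i => nth y (y :: rcons s y) i); split.
  by rewrite /= nth_rcons ltnn eqxx.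
have ch : chain y (rcons s y).
  rewrite -cats1; apply/chain_cat; split=> //; rewrite ls /=; split=> //.
  by right; right.
split.
  move=> i Hi; apply: chain_nth => //; by rewrite size_rcons ltnS.
exists (size s); split=> //.
rewrite -rcons_cons nth_rcons /= ltnSn.
have -> : nth y (y :: s) (size s) = last y s by rewrite -[size s]/((size (y :: s)).-1) nth_last.
by rewrite nth_rcons ltnn eqxx ls.
Qed.

Definition Rb x y : bool := if excluded_middle_informative (Rr x y) then true else false.

Lemma RbP x y : Rb x y = true <-> Rr x y.
Proof. by rewrite /Rb; case: excluded_middle_informative => H; split. Qed.

Lemma count_lt (T : eqType) (a1 a2 : pred T) s x : (forall y, a1 y -> a2 y) ->
  x \in s -> a2 x -> ~~ a1 x -> count a1 s < count a2 s.
Proof.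
move=> sub; elim: s => [|y s IH] //=; rewrite in_cons => /orP [/eqP <- | xs] a2x na1x.
  by rewrite a2x (negbTE na1x) add0n add1n ltnS; apply: sub_count.
have le : (a1 y : nat) <= a2 y by case Ha1: (a1 y) => //; rewrite (sub _ Ha1).
rewrite -addnS; apply: leq_add le _; exact: IH.
Qed.

Lemma select (Q : pred atm) (L : seq atm) : (forall a, Q a -> a \in L) ->
  ~ has_ecycle p -> forall x0, Q x0 ->
  exists x1, Q x1 /\ forall z y, Q z -> Rr x1 z -> Q y -> ~ dep_ext p z y.
Proof.
move=> HL noe.
pose m x := count (fun a => Q a && Rb x a) L.
suff H : forall n x0, m x0 < n -> Q x0 ->
  exists x1, Q x1 /\ forall z y, Q z -> Rr x1 z -> Q y -> ~ dep_ext p z y.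
  by move=> x0; apply: H (ltnSn _).
elim=> [//|n IH] x0 Hm Qx0.
case: (classic (forall z y, Q z -> Rr x0 z -> Q y -> ~ dep_ext p z y)) => [H|H].
  by exists x0.
have [z [y [Qz [Rz [Qy Hd]]]]] : exists z y, Q z /\ Rr x0 z /\ Q y /\ dep_ext p z y.
  apply: NNPP => Hn; apply: H => z y Qz Rz Qy Hd; apply: Hn; by exists z, y.
have Rxy : Rr x0 y := Rr_trans Rz (Rr_step (or_intror (or_intror Hd))).
case: (classic (Rr y x0)) => Ryx.
  by exfalso; apply: noe; apply: (ecycle (Rr_trans Ryx Rz) Hd).
apply: (IH y) => //.
rewrite ltnS in Hm; apply: leq_trans Hm.
apply: (@count_lt _ _ _ _ x0).
- by move=> a /andP [Qa /RbP Ra]; rewrite Qa; apply/RbP; exact: Rr_trans Rxy Ra.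
- exact: HL.
- by rewrite Qx0; apply/RbP; apply: Rr_refl.
- by apply/negP => /andP [_ /RbP].
Qed.
End Graph.

Lemma mem_In (T : eqType) (x : T) s : x \in s -> List.In x s.
Proof. elim: s => [|y s IH] //=; rewrite in_cons => /orP [/eqP ->|/IH]; tauto. Qed.

Lemma In_mem (T : eqType) (x : T) s : List.In x s -> x \in s.
Proof. elim: s => [|y s IH] //= [->|/IH H]; rewrite in_cons ?eqxx // H orbT //. Qed.

Lemma In_map (T U : Type) (g : T -> U) x s : List.In x s -> List.In (g x) (map g s).
Proof. elim: s => [|y s IH] //= [->|/IH]; tauto. Qed.

Lemma In_cat (T : Type) (x : T) s1 s2 : List.In x s1 -> List.In x (s1 ++ s2).
Proof. elim: s1 => [|y s IH] //= [->|/IH]; tauto. Qed.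

Lemma hasPT (T : Type) (a : pred T) s : has a s -> exists x, List.In x s /\ a x.
Proof.
elim: s => [|y s IH] //= /orP [H|/IH [x [H1 H2]]]; first by exists y; tauto.
by exists x; tauto.
Qed.

Lemma hasIT (T : Type) (a : pred T) s x : List.In x s -> a x -> has a s.
Proof. elim: s => [|y s IH] //= [->|/IH H] ax; first by rewrite ax. by rewrite H // orbT. Qed.

Lemma allIT (T : Type) (a : pred T) s : (forall x, List.In x s -> a x) -> all a s.
Proof. elim: s => [|y s IH] //= H; rewrite H /=; [apply: IH => x Hx|]; auto. Qed.

Lemma allPT (T : Type) (a : pred T) s x : all a s -> List.In x s -> a x.
Proof. elim: s => [|y s IH] //= /andP [H1 H2] [<-|/IH]; auto. Qed.

Theorem corollary1 (P C G : eqType) (f : oracle P C G) (p : hexprog P C G)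
    (Ah : pred (hatatom P C G)) :
  oracle_local f ->
  compatible f p Ah ->
  ~ has_ecycle p ->
  (forall Y : pred (hatatom P C G), unfounded_hat (hat_prog p) Ah Y -> forall a, ~~ Y a) ->
  unfounded_free f p (restrict Ah).
Proof.
move=> loc [_ compat] noe noY X [Xsub Xall] a0 Xa0.
apply/negP => Aa0.
pose X1 : pred (atom P C) := fun a => X a && Ah (inl a).
pose L := flatten [seq Defs.head r ++ flatten [seq lat_hex b | b <- bpos r ++ bneg r] | r <- p].
have HL : forall a, X1 a -> a \in L.
  move=> a /andP [Xa _]; have := Xsub a Xa; rewrite unfold_in /atoms_of.
  move=> /hasPT [r [rp /orP [H|/hasP [b bin ab]]]].
    apply/flattenP; exists (Defs.head r ++ flatten [seq lat_hex b | b <- bpos r ++ bneg r]);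
      [apply: In_mem; exact: (In_map _ rp) | by rewrite mem_cat H].
  apply/flattenP; exists (Defs.head r ++ flatten [seq lat_hex b | b <- bpos r ++ bneg r]).
    apply: In_mem; exact: (In_map _ rp).
  rewrite mem_cat; apply/orP; right; apply/flattenP; exists (lat_hex b) => //.
  exact: map_f.
have X1a0 : X1 a0 by rewrite /X1 Xa0.
have [x1 [X1x1 Hx1]] := select HL noe X1a0.
pose Y : pred (hatatom P C G) := fun h =>
  match h with inl a => X1 a && Rb p x1 a | inr _ => false end.
have Yx1 : Y (inl x1) by rewrite /Y X1x1; apply/RbP; apply: Rr_refl.
apply: (negP (noY Y _ (inl x1))) Yx1.
split.
  move=> [a|//] /andP [/andP [Xa _] _]; have := Xsub a Xa; rewrite unfold_in /atoms_of.
  move=> /hasPT [r [rp H]].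
  rewrite unfold_in /atoms_of; apply: (@hasIT _ _ _ (hat_rule r)).
    by apply: In_cat; apply: In_map.
  case/orP: H => [H|/hasP [b bin ab]].
    by apply/orP; left; rewrite /= map_f.
  apply/orP; right; apply/hasP; exists (replace_lit b).
    by rewrite /= -map_cat map_f.
  by case: b bin ab => [a'|e] //= _; rewrite !inE => /eqP ->.
rewrite /hat_prog all_cat !all_map; apply/andP; split; last first.
  by apply/allP => e _.
have Xall' := allPT Xall.
apply: allIT => r rp /=; apply/implyP => /hasP [h' /mapP [h hh ->] Yh].
move: Yh => /andP [X1h /RbP Rh].
have evalE : forall b, b \in bpos r ++ bneg r ->
    eval_hex f (restrict Ah) b = Ah (replace_lit b).
  case=> [a|e] //= bin; rewrite compat //.
  apply/flattenP; exists (ext_of_rule r); first by apply: In_mem; apply: In_map.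
  by rewrite /ext_of_rule mem_pmap; apply/mapP; exists (inr e).
have bf_hat : body_false (eval_hex f) (restrict Ah) r =
    body_false (@eval_hat P C G) Ah (hat_rule r).
  rewrite /body_false /= !has_map; congr orb; apply: eq_in_has => b bin /=;
    by rewrite evalE // mem_cat bin ?orbT.
have extc : forall e, inr e \in bpos r ++ bneg r ->
    f (ext_name e) (restrict Ah) (ext_input e) (ext_output e) !=
    f (ext_name e) (remove_set (restrict Ah) X) (ext_input e) (ext_output e) -> False.
  move=> e ein /eqP Hne.
  have [a [ain Ha]] : exists a, inl (pred_of a) \in ext_input e /\
      restrict Ah a <> remove_set (restrict Ah) X a.
    apply: NNPP => Hn; apply: Hne; apply: loc => a ain.
    apply: NNPP => Hne'; apply: Hn; by exists a.
  have X1a : X1 a.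
    by move: Ha; rewrite /X1 /remove_set /restrict; case: (Ah (inl a)); case: (X a).
  apply: (Hx1 h a X1h Rh X1a).
  exists r; first exact: rp.
  by split=> //; exists e.
have HX : has X (Defs.head r) by apply/hasP; exists h => //; case/andP: X1h.
have := allPT Xall rp; rewrite HX /= => /or3P [Hi|Hii|Hiii].
- by rewrite -bf_hat Hi.
- case Hnb: (body_false (eval_hex f) (restrict Ah) r); first by rewrite -bf_hat Hnb.
  apply/orP; right; apply/orP; left.
  case/orP: Hii => /hasP [b bin nb].
    have Eb : eval_hex f (restrict Ah) b.
      apply: negbNE; apply: contraFN Hnb => H; apply/orP; left; apply/hasP; by exists b.
    case: b bin nb Eb => [a|e] bin nb Eb; last first.
      exfalso; apply: (extc e); first by rewrite mem_cat bin.
      by move: nb Eb => /=; case: (f _ _ _ _); case: (f _ _ _ _).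
    have Xa : X a by move: nb Eb; rewrite /= /remove_set; case: (X a); case: (restrict Ah a).
    have Ya : Y (inl a).
      rewrite /Y /X1 Xa /=; apply/andP; split; first exact: Eb.
      apply/RbP; apply: Rr_trans Rh (Rr_step _); left.
      by exists r.
    apply/orP; left; apply/hasP; exists (inl a).
      by rewrite -[inl a]/(replace_lit (inl a)) map_f.
    by rewrite /eval_hat /= /remove_set Ya andbF.
  have Eb : ~~ eval_hex f (restrict Ah) b.
    apply: contraFN Hnb => H; apply/orP; right; apply/hasP; by exists b.
  case: b bin nb Eb => [a|e] bin nb Eb; last first.
    exfalso; apply: (extc e); first by rewrite mem_cat bin orbT.
    by move: nb Eb => /=; case: (f _ _ _ _); case: (f _ _ _ _).
  by move: nb Eb => /=; rewrite /remove_set; case: (restrict Ah a).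
- apply/orP; right; apply/orP; right; rewrite has_map.
  apply: sub_has Hiii => a /andP [nXa Aa] /=.
  by rewrite /X1 (negbTE nXa) /=.
Qed.
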